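(* Let $\hat\rho$ be a density operator on $L^2(\mathbb R)$ with bounded Fock support. The following are equivalent: (i) $\hat\rho$ is an eigenvector of $\mathcal V_t$ for some $t>1$; (ii) $\hat\rho$ is an eigenvector of $\mathcal V_t$ for all $t\ge1$; (iii) there exists $m\in\mathbb N$ such that $W_{\hat\rho}(\alpha)\propto|\alpha|^{2m}e^{-2|\alpha|^2}$, and the corresponding eigenvalue is $t^m$; (iv) there exists $m\in\mathbb N$ such that $\hat\rho=\frac1{2^m}\sum_{k=0}^m\binom mk|k\rangle\langle k|$.
   Context: Let $\hat a$ be the annihilation operator on $L^2(\mathbb R)$, $\hat n=\hat a^\dagger\hat a$, $\{|k\rangle\}$ the Fock basis, $\hat D(\alpha)=\exp(\alpha\hat a^\dagger-\alpha^*\hat a)$, and $W_{\hat A}(\alpha)=\frac2\pi\mathrm{Tr}[\hat A\hat D(\alpha)(-1)^{\hat n}\hat D(\alpha)^\dagger]$ the Wigner function. An operator $\hat A$ has bounded Fock support if $\hat P_N\hat A\hat P_N=\hat A$ for some $N$, where $\hat P_N=\sum_{k=0}^N|k\rangle\langle k|$. For $t>0$, the Vertigo map on such operators is $\mathcal V_t[\hat A]=\sum_{k\ge0}\frac{(t-1)^k}{k!}t^{\hat n/2}\hat a^k\hat A\hat a^{\dagger k}t^{\hat n/2}$ (finite sum), equivalently $W_{\mathcal V_t[\hat A]}(\alpha)=W_{\hat A}(\sqrt t\alpha)e^{2(t-1)|\alpha|^2}$. ''Eigenvector of $\mathcal V_t$'' means $\mathcal V_t[\hat\rho]=\lambda\hat\rho$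 for some scalar $\lambda$. *)

(* Defs.v *)
From Stdlib Require Import Reals Factorial.
From Coquelicot Require Import Coquelicot.
Open Scope R_scope.

(** An operator with (possibly) bounded Fock support is represented by its
    Fock-basis matrix elements  A i j = <i|A|j>. *)
Definition Op := nat -> nat -> C.

Fixpoint csum (n : nat) (f : nat -> C) : C :=
  match n with O => RtoC 0 | S n' => Cplus (csum n' f) (f n') end.

Definition CSeries (a : nat -> C) : C :=
  (Series (fun n => Re (a n)), Series (fun n => Im (a n))).

Fixpoint Cpow (z : C) (n : nat) : C :=
  match n with O => RtoC 1 | S n' => Cmult z (Cpow z n') end.

(** bounded Fock support: P_N A P_N = A for some N *)
Definition fock_bounded (A : Op) : Prop :=
  exists N : nat, forall i j, (N < i)%nat \/ (N < j)%nat -> A i j = RtoC 0.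

Definition trace (A : Op) : C := CSeries (fun i => A i i).

Definition is_density (A : Op) : Prop :=
  (forall i j, A j i = Cconj (A i j)) /\
  (forall (M : nat) (v : nat -> C),
      0 <= Re (csum M (fun i => csum M (fun j =>
                 Cmult (Cmult (Cconj (v i)) (A i j)) (v j))))) /\
  trace A = RtoC 1.

(** Vertigo map: V_t[A] = sum_k (t-1)^k/k! t^{n/2} a^k A a^{dag k} t^{n/2}.
    <i| a^k = sqrt((i+k)!/i!) <i+k|,  a^{dag k}|j> = sqrt((j+k)!/j!) |j+k>. *)
Definition vertigo (t : R) (A : Op) : Op := fun i j =>
  CSeries (fun k =>
    Cmult (RtoC ((t - 1) ^ k / INR (Factorial.fact k) * sqrt t ^ i * sqrt t ^ j
                 * sqrt (INR (Factorial.fact (i + k)) / INR (Factorial.fact i))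
                 * sqrt (INR (Factorial.fact (j + k)) / INR (Factorial.fact j))))
          (A (i + k)%nat (j + k)%nat)).

Definition vertigo_eigen (t : R) (A : Op) : Prop :=
  exists lam : C, forall i j, vertigo t A i j = Cmult lam (A i j).

(** Fock matrix element <m|D(al)|n> of the displacement operator
    D(al) = e^{-|al|^2/2} e^{al a^dag} e^{-al^* a}. *)
Definition disp_elem (al : C) (m n : nat) : C :=
  Cmult (RtoC (exp (- (Cmod al) ^ 2 / 2)))
    (csum (S (Nat.min m n)) (fun k =>
       Cmult (RtoC (sqrt (INR (Factorial.fact m) * INR (Factorial.fact n))
                    / (INR (Factorial.fact k) * INR (Factorial.fact (m - k)) * INR (Factorial.fact (n - k)))))
             (Cmult (Cpow al (m - k)) (Cpow (Copp (Cconj al)) (n - k))))).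

(** <j| D(al) (-1)^n D(al)^dag |i> *)
Definition disp_parity_elem (al : C) (j i : nat) : C :=
  CSeries (fun l => Cmult (RtoC ((-1) ^ l))
                          (Cmult (disp_elem al j l) (Cconj (disp_elem al i l)))).

(** Wigner function W_A(al) = 2/pi Tr[A D(al) (-1)^n D(al)^dag] *)
Definition wigner (A : Op) (al : C) : C :=
  Cmult (RtoC (2 / PI))
    (CSeries (fun i => CSeries (fun j => Cmult (A i j) (disp_parity_elem al j i)))).

Definition wigner_prop (m : nat) (A : Op) : Prop :=
  exists c : C, forall al : C,
    wigner A al = Cmult c (RtoC (Cmod al ^ (2 * m) * exp (-2 * Cmod al ^ 2))).

Definition binom_state (m : nat) : Op := fun i j =>
  if Nat.eqb i j then
    (if Nat.leb i m then RtoC (Binomial.C m i / 2 ^ m) else RtoC 0)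
  else RtoC 0.

(* Main.v *)
Require Import Defs.
From Stdlib Require Import Reals Lra Lia Psatz Arith.
From Coquelicot Require Import Coquelicot.
Open Scope R_scope.

Lemma Cpow_eq : forall z n, Defs.Cpow z n = Cpow z n.
Proof. intros z n; induction n; simpl; [auto| rewrite IHn; auto]. Qed.

Definition Cis_series (a : nat -> C) (l : C) : Prop :=
  is_series (fun n => Re (a n)) (Re l) /\ is_series (fun n => Im (a n)) (Im l).

Lemma Cis_unique a l : Cis_series a l -> CSeries a = l.
Proof.
  intros [H1 H2]; unfold CSeries.
  rewrite (is_series_unique _ _ H1), (is_series_unique _ _ H2).
  destruct l; reflexivity.
Qed.

Lemma Cis_ext a b l : (forall n, a n = b n) -> Cis_series a l -> Cis_series b l.
Proof.
  intros E [H1 H2]; split; eapply is_series_ext; try eassumption; intros; simpl; rewrite E; auto.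
Qed.

Lemma Cis_ext_l a l l' : l = l' -> Cis_series a l -> Cis_series a l'.
Proof. intros ->; auto. Qed.

Lemma Ris_plus (a b : nat -> R) la lb : is_series a la -> is_series b lb ->
  is_series (fun n => a n + b n) (la + lb).
Proof. intros; apply (is_series_plus a b la lb); auto. Qed.

Lemma Ris_scal (c : R) (a : nat -> R) la : is_series a la ->
  is_series (fun n => c * a n) (c * la).
Proof. intros; apply (is_series_scal_l c a la); auto. Qed.

Lemma Ris_zero : is_series (fun _ : nat => 0) 0.
Proof.
  unfold is_series. eapply filterlim_ext.
  2: apply filterlim_const.
  intros n; simpl. induction n. rewrite sum_O; auto.
  rewrite sum_Sn, <- IHn. simpl. unfold plus; simpl. ring.
Qed.

Lemma Cis_plus a b la lb : Cis_series a la -> Cis_series b lb ->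
  Cis_series (fun n => a n + b n)%C (la + lb)%C.
Proof.
  intros [H1 H2] [H3 H4]; split; simpl; apply Ris_plus; auto.
Qed.

Lemma Cis_scal (c : C) a l : Cis_series a l -> Cis_series (fun n => c * a n)%C (c * l)%C.
Proof.
  intros [H1 H2]; split.
  - pose proof (Ris_plus _ _ _ _ (Ris_scal (Re c) _ _ H1) (Ris_scal (- Im c) _ _ H2)) as H.
    replace (Re (c * l)%C) with (Re c * Re l + - Im c * Im l) by (destruct c, l; simpl; ring).
    eapply is_series_ext; [|exact H]. intros; destruct c, (a n); simpl; ring.
  - pose proof (Ris_plus _ _ _ _ (Ris_scal (Re c) _ _ H2) (Ris_scal (Im c) _ _ H1)) as H.
    replace (Im (c * l)%C) with (Re c * Im l + Im c * Re l) by (destruct c, l; simpl; ring).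
    eapply is_series_ext; [|exact H]. intros; destruct c, (a n); simpl; ring.
Qed.

Lemma Cis_zero : Cis_series (fun _ => RtoC 0) (RtoC 0).
Proof. split; simpl; apply Ris_zero. Qed.

Lemma Cis_csum K (a : nat -> nat -> C) (l : nat -> C) :
  (forall r, (r < K)%nat -> Cis_series (a r) (l r)) ->
  Cis_series (fun n => csum K (fun r => a r n)) (csum K l).
Proof.
  induction K; intros H; simpl.
  - apply Cis_zero.
  - apply Cis_plus. apply IHK; intros; apply H; lia. apply H; lia.
Qed.

Lemma Ris_decr (a : nat -> R) n l : is_series (fun k => a (n + k)%nat) l ->
  (forall k, (k < n)%nat -> a k = 0) -> is_series a l.
Proof.
  intros H Z. destruct n.
  - eapply is_series_ext; [|exact H]; intros; simpl; auto.
  - assert (Hs : forall m, (m <= n)%nat -> sum_n a m = 0).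
    { induction m; intros. rewrite sum_O. apply Z; lia. rewrite sum_Sn, IHm by lia.
      rewrite Z by lia. unfold plus; simpl; ring. }
    apply (is_series_decr_n a (S n) l). lia.
    simpl. rewrite Hs by lia.
    match goal with |- is_series _ ?L => replace L with l; [exact H|unfold plus, opp; simpl; apply (f_equal (fun x:R => x)) ; simpl; unfold zero; simpl; rewrite Ropp_0, Rplus_0_r; reflexivity] end.
Qed.

Lemma Cis_shift a l s : Cis_series a l ->
  Cis_series (fun n => if (s <=? n)%nat then a (n - s)%nat else RtoC 0) l.
Proof.
  intros [H1 H2]; split; apply (Ris_decr _ s).
  - eapply is_series_ext; [|exact H1]; intros k; simpl.
    replace (s <=? s + k)%nat with true by (symmetry; apply Nat.leb_le; lia).
    f_equal; f_equal; lia.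
  - intros k Hk. replace (s <=? k)%nat with false by (symmetry; apply Nat.leb_gt; lia). auto.
  - eapply is_series_ext; [|exact H2]; intros k; simpl.
    replace (s <=? s + k)%nat with true by (symmetry; apply Nat.leb_le; lia).
    f_equal; f_equal; lia.
  - intros k Hk. replace (s <=? k)%nat with false by (symmetry; apply Nat.leb_gt; lia). auto.
Qed.

Lemma Re_csum N a : Re (csum N a) = match N with O => 0 | S _ => sum_n (fun n => Re (a n)) (pred N) end.
Proof.
  induction N. reflexivity.
  change (csum (S N) a) with (csum N a + a N)%C.
  destruct N.
  - simpl. rewrite sum_O. unfold Re, Im; simpl; ring.
  - transitivity (Re (csum (S N) a) + Re (a (S N))). destruct (csum (S N) a), (a (S N)); reflexivity.
    rewrite IHN. simpl. rewrite sum_Sn. reflexivity.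
Qed.
Lemma Im_csum N a : Im (csum N a) = match N with O => 0 | S _ => sum_n (fun n => Im (a n)) (pred N) end.
Proof.
  induction N. reflexivity.
  change (csum (S N) a) with (csum N a + a N)%C.
  destruct N.
  - simpl. rewrite sum_O. unfold Re, Im; simpl; ring.
  - transitivity (Im (csum (S N) a) + Im (a (S N))). destruct (csum (S N) a), (a (S N)); reflexivity.
    rewrite IHN. simpl. rewrite sum_Sn. reflexivity.
Qed.

Lemma Ris_finite (a : nat -> R) N : (forall n, (N <= n)%nat -> a n = 0) ->
  is_series a (match N with O => 0 | S _ => sum_n a (pred N) end).
Proof.
  intros Z. destruct N.
  - eapply is_series_ext; [|apply Ris_zero]. intros; simpl; symmetry; apply Z; lia.
  - apply (is_series_decr_n a (S N)). lia.
    match goal with |- is_series _ ?L => replace L with 0 end.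
    eapply is_series_ext; [|apply Ris_zero]. intros; simpl; symmetry; apply Z; lia.
    simpl. unfold plus, opp; simpl. symmetry; apply Rplus_opp_r.
Qed.

Lemma Cis_finite a N : (forall n, (N <= n)%nat -> a n = RtoC 0) -> Cis_series a (csum N a).
Proof.
  intros Z; split; rewrite ?Re_csum, ?Im_csum.
  - apply (Ris_finite (fun n => Re (a n))). intros; rewrite Z; auto.
  - apply (Ris_finite (fun n => Im (a n))). intros; rewrite Z; auto.
Qed.

Lemma CSeries_finite a N : (forall n, (N <= n)%nat -> a n = RtoC 0) -> CSeries a = csum N a.
Proof. intros; apply Cis_unique, Cis_finite; auto. Qed.

Lemma Cis_exp (w : R) : Cis_series (fun n => RtoC (w ^ n / INR (fact n))) (RtoC (exp w)).
Proof.
  split; simpl.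
  - pose proof (is_exp_Reals w) as H. unfold is_pseries in H.
    eapply is_series_ext; [|exact H]. intros n; simpl. unfold scal; simpl. unfold mult; simpl.
    rewrite pow_n_pow. unfold Rdiv. ring.
  - apply Ris_zero.
Qed.

Lemma csum_ext n f g : (forall i, (i < n)%nat -> f i = g i) -> csum n f = csum n g.
Proof. induction n; intros H; simpl; auto. rewrite IHn, H; auto; intros; apply H; lia. Qed.

Lemma csum_plus n f g : csum n (fun i => f i + g i)%C = (csum n f + csum n g)%C.
Proof. induction n; simpl. ring. rewrite IHn; ring. Qed.

Lemma csum_mult_l n c f : (c * csum n f)%C = csum n (fun i => c * f i)%C.
Proof. induction n; simpl. ring. rewrite <- IHn; ring. Qed.

Lemma csum_mult_r n c f : (csum n f * c)%C = csum n (fun i => f i * c)%C.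
Proof. induction n; simpl. ring. rewrite <- IHn; ring. Qed.

Lemma csum_opp n f : (- csum n f)%C = csum n (fun i => - f i)%C.
Proof. induction n; simpl. ring. rewrite <- IHn; ring. Qed.

Lemma csum_zero n f : (forall i, (i < n)%nat -> f i = RtoC 0) -> csum n f = RtoC 0.
Proof. induction n; intros H; simpl; auto. rewrite IHn, H; try lia. ring. intros; apply H; lia. Qed.

Lemma csum_split a b f : csum (a + b) f = (csum a f + csum b (fun i => f (a + i)%nat))%C.
Proof.
  induction b; simpl. rewrite Nat.add_0_r. ring.
  rewrite Nat.add_succ_r. simpl. rewrite IHb. ring.
Qed.

Lemma csum_front n f : csum (S n) f = (f O + csum n (fun i => f (S i)))%C.
Proof. replace (S n) with (1 + n)%nat by lia. rewrite csum_split. simpl. f_equal. ring. Qed.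

Lemma csum_swap n m (f : nat -> nat -> C) :
  csum n (fun i => csum m (fun j => f i j)) = csum m (fun j => csum n (fun i => f i j)).
Proof.
  induction n; simpl.
  - symmetry; apply csum_zero; auto.
  - rewrite IHn. rewrite <- csum_plus. auto.
Qed.

Lemma csum_single n p f : (p < n)%nat -> (forall i, (i < n)%nat -> i <> p -> f i = RtoC 0) ->
  csum n f = f p.
Proof.
  intros Hp H. replace n with (p + (1 + (n - p - 1)))%nat by lia.
  rewrite !csum_split. rewrite (csum_zero p). rewrite (csum_zero (n - p - 1)).
  simpl. rewrite Nat.add_0_r. ring.
  intros; apply H; lia. intros; apply H; lia.
Qed.

Lemma csum_extend n m f : (n <= m)%nat -> (forall i, (n <= i)%nat -> (i < m)%nat -> f i = RtoC 0) ->
  csum m f = csum n f.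
Proof.
  intros Hnm H. replace m with (n + (m - n))%nat by lia. rewrite csum_split.
  rewrite (csum_zero (m - n)). ring. intros; apply H; lia.
Qed.

Lemma csum_conj n f : Cconj (csum n f) = csum n (fun i => Cconj (f i)).
Proof.
  induction n; simpl. unfold Cconj, RtoC; simpl. f_equal; ring.
  rewrite Cplus_conj, IHn; auto.
Qed.

Lemma csum_RtoC n (f : nat -> R) : csum (S n) (fun i => RtoC (f i)) = RtoC (sum_f_R0 f n).
Proof.
  induction n; simpl. unfold Cplus, RtoC; simpl. f_equal; ring.
  simpl in IHn. rewrite IHn. rewrite RtoC_plus. auto.
Qed.

Lemma csum_rev n f : csum (S n) f = csum (S n) (fun i => f (n - i)%nat).
Proof.
  revert f; induction n; intros f. reflexivity.
  rewrite csum_front. rewrite (IHn (fun i => f (S i))).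
  change (csum (S (S n)) (fun i => f (S n - i)%nat)) with
    (csum (S n) (fun i => f (S n - i)%nat) + f (S n - S n)%nat)%C.
  rewrite Nat.sub_diag.
  rewrite (csum_ext (S n) (fun i => f (S (n - i))) (fun i => f (S n - i)%nat)).
  2:{ intros i Hi. f_equal. lia. }
  ring.
Qed.

Definition bnd (K : nat) (A : Op) : Prop :=
  forall i j, (K <= i)%nat \/ (K <= j)%nat -> A i j = RtoC 0.

Definition vcoef (t : R) (i j k : nat) : R :=
  (t - 1) ^ k / INR (fact k) * sqrt t ^ i * sqrt t ^ j
  * sqrt (INR (fact (i + k)) / INR (fact i))
  * sqrt (INR (fact (j + k)) / INR (fact j)).

Lemma vertigo_fin t A K i j : bnd K A ->
  vertigo t A i j = csum K (fun k => RtoC (vcoef t i j k) * A (i + k)%nat (j + k)%nat)%C.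
Proof.
  intros HA. unfold vertigo. apply CSeries_finite. intros n Hn.
  rewrite HA by lia. unfold vcoef. ring.
Qed.

Lemma vcoef0 t i j : vcoef t i j 0 = sqrt t ^ i * sqrt t ^ j.
Proof.
  unfold vcoef. rewrite !Nat.add_0_r.
  rewrite !Rdiv_diag by apply INR_fact_neq_0. rewrite sqrt_1. simpl. field.
Qed.

Lemma vertigo_front t A K i j : bnd K A ->
  vertigo t A i j = (RtoC (sqrt t ^ i * sqrt t ^ j) * A i j +
     csum K (fun k => RtoC (vcoef t i j (S k)) * A (i + S k)%nat (j + S k)%nat))%C.
Proof.
  intros HA. rewrite (vertigo_fin t A (S K)).
  rewrite csum_front. rewrite vcoef0, !Nat.add_0_r. auto.
  intros a b Hab. apply HA. lia.
Qed.

Lemma Rsqrt_pow_lt t a b : 1 < t -> (a < b)%nat -> sqrt t ^ a < sqrt t ^ b.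
Proof.
  intros Ht Hab. apply Rlt_pow; auto.
  rewrite <- sqrt_1. apply sqrt_lt_1; lra.
Qed.

Lemma sqrt_pow2 t n : 0 <= t -> sqrt t ^ (2 * n) = t ^ n.
Proof. intros Ht. rewrite pow_mult. rewrite pow2_sqrt; auto. Qed.

Lemma Cmult_reg_l (c z : C) : (c * z = RtoC 0)%C -> c <> RtoC 0 -> z = RtoC 0.
Proof.
  intros H Hc. replace z with (/ c * (c * z))%C by (field; auto). rewrite H. ring.
Qed.

Lemma uniq_eigen t M K (D : Op) : 1 < t -> bnd K D ->
  (forall i j, vertigo t D i j = (RtoC (t ^ M) * D i j)%C) ->
  D M M = RtoC 0 ->
  (forall i j, (M < i)%nat \/ (M < j)%nat -> D i j = RtoC 0) ->
  forall i j, D i j = RtoC 0.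
Proof.
  intros Ht HK Heig HMM Hout.
  assert (H : forall d i j, (2 * M <= i + j + d)%nat -> D i j = RtoC 0).
  { induction d; intros i j Hij.
    - destruct (Nat.lt_ge_cases M i) as [Hi|Hi]. apply Hout; auto.
      destruct (Nat.lt_ge_cases M j) as [Hj|Hj]. apply Hout; auto.
      replace i with M by lia. replace j with M by lia. auto.
    - destruct (Nat.le_gt_cases (2 * M) (i + j + d)) as [Hd|Hd]. apply IHd; auto.
      destruct (Nat.lt_ge_cases M i) as [Hi|Hi]. apply Hout; auto.
      destruct (Nat.lt_ge_cases M j) as [Hj|Hj]. apply Hout; auto.
      pose proof (Heig i j) as E. rewrite (vertigo_front t D K) in E by auto.
      rewrite csum_zero in E. 2:{ intros k Hk. rewrite IHd by lia. ring. }
      assert (Hne : sqrt t ^ i * sqrt t ^ j <> t ^ M).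
      { rewrite <- pow_add. rewrite <- (sqrt_pow2 t M) by lra. apply Rlt_not_eq.
        apply Rsqrt_pow_lt; auto. lia. }
      assert (E2 : (RtoC (sqrt t ^ i * sqrt t ^ j - t ^ M) * D i j = RtoC 0)%C).
      { rewrite RtoC_minus.
        replace ((RtoC (sqrt t ^ i * sqrt t ^ j) - RtoC (t ^ M)) * D i j)%C with
          (RtoC (sqrt t ^ i * sqrt t ^ j) * D i j + RtoC 0 - RtoC (t ^ M) * D i j)%C by ring.
        rewrite <- E. ring. }
      apply (Cmult_reg_l _ _ E2). intros E3. apply Hne. apply RtoC_inj in E3. lra. }
  intros i j. apply (H (2 * M)%nat). lia.
Qed.

Lemma binom_bnd m : bnd (S m) (binom_state m).
Proof.
  intros i j H. unfold binom_state.
  destruct (Nat.eqb_spec i j); auto. subst.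
  replace (j <=? m)%nat with false by (symmetry; apply Nat.leb_gt; lia). auto.
Qed.

Lemma binom_off m i j : i <> j -> binom_state m i j = RtoC 0.
Proof. intros H; unfold binom_state. destruct (Nat.eqb_spec i j); auto; lia. Qed.

Lemma binom_diag m i : binom_state m i i =
  if (i <=? m)%nat then RtoC (Binomial.C m i / 2 ^ m) else RtoC 0.
Proof. unfold binom_state. rewrite Nat.eqb_refl. auto. Qed.

Lemma fact_pos n : 0 < INR (fact n).
Proof. apply lt_0_INR. apply lt_O_fact. Qed.

Lemma binom_eigen m t : 0 <= t -> forall i j,
  vertigo t (binom_state m) i j = (RtoC (t ^ m) * binom_state m i j)%C.
Proof.
  intros Ht i j. rewrite (vertigo_fin t _ (S m)) by apply binom_bnd.
  destruct (Nat.eq_dec i j) as [<-|Hij].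
  2:{ rewrite binom_off by auto. rewrite csum_zero. ring.
      intros k _. rewrite binom_off by lia. ring. }
  rewrite binom_diag. destruct (Nat.leb_spec i m) as [Him|Him].
  2:{ rewrite csum_zero. ring. intros k _. rewrite binom_bnd by lia. ring. }
  rewrite (csum_extend (S (m - i))) by (try lia; intros k Hk _; rewrite binom_bnd by lia; ring).
  rewrite (csum_ext _ _ (fun k => RtoC (Binomial.C (m - i) k * (t - 1) ^ k * 1 ^ (m - i - k)
      * (t ^ i * Binomial.C m i / 2 ^ m)))).
  2:{ intros k Hk. rewrite binom_diag. replace (i + k <=? m)%nat with true
        by (symmetry; apply Nat.leb_le; lia).
      rewrite <- RtoC_mult. f_equal. unfold vcoef, Binomial.C.
      assert (Hs : forall x, 0 <= x -> sqrt x * sqrt x = x) by (intros; apply sqrt_sqrt; auto).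
      assert (Hq : 0 <= INR (fact (i + k)) / INR (fact i)).
      { apply Rlt_le, Rdiv_lt_0_compat; apply fact_pos. }
      replace ((t - 1) ^ k / INR (fact k) * sqrt t ^ i * sqrt t ^ i *
         sqrt (INR (fact (i + k)) / INR (fact i)) * sqrt (INR (fact (i + k)) / INR (fact i)))
        with ((t - 1) ^ k / INR (fact k) * (sqrt t ^ i * sqrt t ^ i) *
         (sqrt (INR (fact (i + k)) / INR (fact i)) * sqrt (INR (fact (i + k)) / INR (fact i)))) by ring.
      rewrite Hs by auto.
      replace (sqrt t ^ i * sqrt t ^ i) with (t ^ i).
      2:{ rewrite <- (sqrt_pow2 t i) by auto. rewrite <- pow_add. f_equal. lia. }
      replace (m - (i + k))%nat with (m - i - k)%nat by lia.
      rewrite pow1.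
      pose proof (INR_fact_neq_0 k). pose proof (INR_fact_neq_0 i).
      pose proof (INR_fact_neq_0 (i + k)). pose proof (INR_fact_neq_0 (m - i)).
      pose proof (INR_fact_neq_0 (m - i - k)). pose proof (pow_lt 2 m ltac:(lra)).
      field. repeat split; auto; lra. }
  rewrite csum_RtoC. rewrite <- scal_sum. rewrite <- binomial.
  replace (t - 1 + 1) with t by ring.
  replace (t ^ m) with (t ^ i * t ^ (m - i)) by (rewrite <- pow_add; f_equal; lia).
  rewrite <- RtoC_mult. f_equal. field. apply pow_nonzero; lra.
Qed.

Lemma binom_trace m : csum (S m) (fun i => binom_state m i i) = RtoC 1.
Proof.
  rewrite (csum_ext _ _ (fun i => RtoC (Binomial.C m i * 1 ^ i * 1 ^ (m - i) * / 2 ^ m))).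
  rewrite csum_RtoC, <- scal_sum, <- binomial. f_equal. replace (1 + 1) with 2 by ring.
  field. apply pow_nonzero; lra.
  intros i Hi. rewrite binom_diag. replace (i <=? m)%nat with true by (symmetry; apply Nat.leb_le; lia).
  f_equal. rewrite !pow1. field. apply pow_nonzero; lra.
Qed.

Lemma trace_fin K A : bnd K A -> trace A = csum K (fun i => A i i).
Proof. intros H. unfold trace. apply CSeries_finite. intros; apply H; lia. Qed.

Lemma csum_two n p q f : p <> q -> (p < n)%nat -> (q < n)%nat ->
  (forall i, (i < n)%nat -> i <> p -> i <> q -> f i = RtoC 0) ->
  csum n f = (f p + f q)%C.
Proof.
  intros Hpq Hp Hq H.
  assert (E : forall i, (i < n)%nat -> f i = ((if (i =? p)%nat then f p else RtoC 0) +
                                          (if (i =? q)%nat then f q else RtoC 0))%C).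
  { intros i Hi. destruct (Nat.eqb_spec i p); destruct (Nat.eqb_spec i q); subst; try lia.
    ring. ring. rewrite H; auto. ring. }
  rewrite (csum_ext _ _ _ E), csum_plus.
  rewrite (csum_single n p), (csum_single n q); auto.
  rewrite Nat.eqb_refl, Nat.eqb_refl. auto.
  intros i _ Hi. destruct (Nat.eqb_spec i q); auto; lia.
  intros i _ Hi. destruct (Nat.eqb_spec i p); auto; lia.
Qed.

Lemma psd_zero rho k j : is_density rho -> rho k k = RtoC 0 -> rho j k = RtoC 0.
Proof.
  intros [Hsa [Hpsd _]] Hkk.
  destruct (Nat.eq_dec j k) as [->|Hjk]; auto.
  set (z := rho j k). set (r := Re (rho j j)).
  set (eps := / (r * r + 1)).
  assert (Heps : 0 < eps) by (unfold eps; apply Rinv_0_lt_compat; nra).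
  assert (Her : eps * r < 2).
  { apply (Rmult_lt_reg_r (r * r + 1)). nra.
    replace (eps * r * (r * r + 1)) with r by (unfold eps; field; nra). nra. }
  set (s := (RtoC (- eps) * z)%C).
  set (v := fun i => if (i =? j)%nat then s else if (i =? k)%nat then RtoC 1 else RtoC 0).
  pose proof (Hpsd (S (Nat.max j k)) v) as H.
  rewrite (csum_two _ j k) in H; try lia.
  2:{ intros i _ Hi1 Hi2. unfold v. destruct (Nat.eqb_spec i j); try lia.
      destruct (Nat.eqb_spec i k); try lia. apply csum_zero. intros. 
      unfold Cconj; simpl. unfold Cmult; simpl. apply injective_projections; simpl; ring. }
  rewrite !(csum_two _ j k) in H; try lia.
  2,3: intros i _ Hi1 Hi2; unfold v; destruct (Nat.eqb_spec i j); try lia;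
      destruct (Nat.eqb_spec i k); try lia; ring.
  unfold v in H. rewrite Nat.eqb_refl in H.
  destruct (Nat.eqb_spec k j); try lia. rewrite Nat.eqb_refl in H.
  rewrite Hkk, (Hsa j k) in H. fold z in H.
  assert (Hz : 0 <= Re z * Re z + Im z * Im z /\ Re z * Re z + Im z * Im z <= 0).
  { split. nra.
    unfold s in H. unfold r in *. destruct z as [a b]. destruct (rho j j) as [c d].
    simpl in H, Her |- *.
    assert (H2 : 0 <= eps * (a * a + b * b) * (eps * c - 2)) by nra.
    assert (H3 : eps * (a * a + b * b) * (eps * c - 2) <= 0 -> a * a + b * b <= 0).
    { intros. destruct (Rle_lt_dec (a * a + b * b) 0); auto.
      assert (0 < eps * (a * a + b * b)) by nra. nra. }
    apply H3. assert (0 <= eps * (a * a + b * b)) by nra. assert (eps * c - 2 < 0) by lra. nra. }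
  destruct z as [a b] eqn:Ez. simpl in Hz.
  assert (a = 0) by nra. assert (b = 0) by nra. subst. auto.
Qed.

Lemma psd_zero' rho k j : is_density rho -> rho k k = RtoC 0 -> rho k j = RtoC 0.
Proof.
  intros Hd Hkk. destruct Hd as [Hsa Hr]. rewrite Hsa.
  rewrite (psd_zero rho k j); [|split; auto|auto]. unfold Cconj; simpl.
  apply injective_projections; simpl; ring.
Qed.

Lemma max_index (P : nat -> Prop) n : (exists i, (i < n)%nat /\ P i) ->
  exists M, (M < n)%nat /\ P M /\ forall k, (M < k)%nat -> (k < n)%nat -> ~ P k.
Proof.
  induction n; intros [i [Hi HP]]. lia.
  destruct (Classical_Prop.classic (P n)) as [Hn|Hn].
  - exists n. split; [lia|]. split; auto. intros; lia.
  - destruct IHn as [M [HM1 [HM2 HM3]]].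
    exists i; split; auto. destruct (Nat.eq_dec i n); subst; auto. contradiction. lia.
    exists M. split; [lia|]. split; auto. intros k Hk1 Hk2.
    destruct (Nat.eq_dec k n); subst; auto. apply HM3; lia.
Qed.

Lemma fock_bnd A : fock_bounded A -> exists K, bnd K A.
Proof. intros [N HN]. exists (S N). intros i j H. apply HN. lia. Qed.

Lemma bnd_mono K K' A : (K <= K')%nat -> bnd K A -> bnd K' A.
Proof. intros HK H i j Hij. apply H. lia. Qed.

Lemma Cmult_reg_r' (c z w : C) : (c * z = c * w)%C -> c <> RtoC 0 -> z = w.
Proof.
  intros H Hc. replace z with (/ c * (c * z))%C by (field; auto). rewrite H. field; auto.
Qed.

Lemma eig_binom rho t : is_density rho -> fock_bounded rho -> 1 < t ->
  vertigo_eigen t rho -> exists m, forall i j, rho i j = binom_state m i j.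
Proof.
  intros Hd Hb Ht [lam Hlam].
  destruct (fock_bnd _ Hb) as [K HK].
  assert (Hex : exists i, (i < K)%nat /\ rho i i <> RtoC 0).
  { apply Classical_Pred_Type.not_all_not_ex. intros Hall.
    destruct Hd as [_ [_ Htr]]. rewrite (trace_fin K) in Htr by auto.
    rewrite csum_zero in Htr. apply RtoC_inj in Htr. lra.
    intros i Hi. destruct (Classical_Prop.classic (rho i i = RtoC 0)); auto.
    exfalso; apply (Hall i); auto. }
  destruct (max_index _ _ Hex) as [M [HMK [HMM Hmax]]].
  assert (Hdiag : forall k, (M < k)%nat -> rho k k = RtoC 0).
  { intros k Hk. destruct (Nat.lt_ge_cases k K).
    destruct (Classical_Prop.classic (rho k k = RtoC 0)); auto. exfalso; apply (Hmax k); auto.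
    apply HK; lia. }
  assert (Hout : forall i j, (M < i)%nat \/ (M < j)%nat -> rho i j = RtoC 0).
  { intros i j [H|H]. apply psd_zero'; auto. apply psd_zero; auto. }
  assert (Hlam' : lam = RtoC (t ^ M)).
  { pose proof (Hlam M M) as E. rewrite (vertigo_front t rho K) in E by auto.
    rewrite csum_zero in E. 2:{ intros k _. rewrite Hdiag by lia. ring. }
    replace (sqrt t ^ M * sqrt t ^ M) with (t ^ M) in E.
    2:{ rewrite <- (sqrt_pow2 t M) by lra. rewrite <- pow_add. f_equal. lia. }
    symmetry. apply (Cmult_reg_r' (rho M M)); auto.
    rewrite Cmult_comm, (Cmult_comm _ lam). rewrite <- E. ring. }
  subst lam.
  set (beta := (rho M M * RtoC (2 ^ M))%C).
  set (D := fun i j => (rho i j - beta * binom_state M i j)%C).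
  set (K2 := (K + S M)%nat).
  assert (HK2 : bnd K2 rho) by (apply (bnd_mono K); auto; unfold K2; lia).
  assert (HB2 : bnd K2 (binom_state M)) by (apply (bnd_mono (S M)); [unfold K2; lia|apply binom_bnd]).
  assert (HD2 : bnd K2 D).
  { intros i j H. unfold D. rewrite HK2, HB2 by auto. ring. }
  assert (HD0 : forall i j, D i j = RtoC 0).
  { apply (uniq_eigen t M K2); auto.
    - intros i j. rewrite !(vertigo_fin t _ K2) by auto. unfold D.
      rewrite (csum_ext _ _ (fun k => RtoC (vcoef t i j k) * rho (i + k)%nat (j + k)%nat
         - beta * (RtoC (vcoef t i j k) * binom_state M (i + k)%nat (j + k)%nat))%C)
        by (intros; ring).
      unfold Cminus. rewrite csum_plus, <- csum_opp, <- csum_mult_l.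
      rewrite <- (vertigo_fin t rho K2), <- (vertigo_fin t (binom_state M) K2) by auto.
      rewrite Hlam, binom_eigen by lra. ring.
    - unfold D, beta. rewrite binom_diag, Nat.leb_refl.
      unfold Binomial.C. rewrite Nat.sub_diag.
      rewrite <- Cmult_assoc, <- RtoC_mult.
      replace (2 ^ M * (INR (fact M) / (INR (fact M) * INR (fact 0)) / 2 ^ M)) with 1.
      ring. simpl. field. split. apply INR_fact_neq_0. apply pow_nonzero; lra.
    - intros i j H. unfold D. rewrite Hout, binom_bnd by lia. ring. }
  assert (Hrho : forall i j, rho i j = (beta * binom_state M i j)%C).
  { intros i j. pose proof (HD0 i j) as E. unfold D in E.
    replace (rho i j) with (rho i j - beta * binom_state M i j + beta * binom_state M i j)%C by ring.
    rewrite E. ring. }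
  assert (Hbeta : beta = RtoC 1).
  { destruct Hd as [_ [_ Htr]]. rewrite (trace_fin K2) in Htr by auto.
    rewrite (csum_ext _ _ (fun i => beta * binom_state M i i)%C) in Htr by auto.
    rewrite <- csum_mult_l in Htr.
    rewrite (csum_extend (S M)) in Htr. rewrite binom_trace in Htr.
    rewrite <- Htr. ring. unfold K2; lia. intros; rewrite binom_bnd by lia; ring. }
  exists M. intros i j. rewrite Hrho, Hbeta. ring.
Qed.

Definition sf n := sqrt (INR (fact n)).

Lemma sf_pos n : 0 < sf n.
Proof. apply sqrt_lt_R0, fact_pos. Qed.

Lemma sf_sq n : sf n * sf n = INR (fact n).
Proof. apply sqrt_sqrt. apply Rlt_le, fact_pos. Qed.

Lemma sqrt_fact_div a b : sqrt (INR (fact a) / INR (fact b)) = sf a / sf b.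
Proof. apply sqrt_div_alt, fact_pos. Qed.

Definition Ec (b : C) (j k : nat) : C :=
  if (k <=? j)%nat then (b ^ (j - k) * RtoC (sf j / sf k / INR (fact (j - k))))%C else RtoC 0.

Lemma Ec_out b j k : (j < k)%nat -> Ec b j k = RtoC 0.
Proof. intros H; unfold Ec. replace (k <=? j)%nat with false by (symmetry; apply Nat.leb_gt; lia). auto. Qed.

Lemma Ec_in b j k : (k <= j)%nat -> Ec b j k = (b ^ (j - k) * RtoC (sf j / sf k / INR (fact (j - k))))%C.
Proof. intros H; unfold Ec. replace (k <=? j)%nat with true by (symmetry; apply Nat.leb_le; lia). auto. Qed.

Definition ex2 (al : C) : R := exp (- (Cmod al) ^ 2 / 2).

Lemma disp_E al m n K : (Nat.min m n < K)%nat ->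
  disp_elem al m n = (RtoC (ex2 al) * csum K (fun k => Ec al m k * Ec (- Cconj al) n k))%C.
Proof.
  intros HK. unfold disp_elem, ex2. f_equal.
  rewrite (csum_extend (S (Nat.min m n)) K); [|lia|].
  2:{ intros k Hk1 Hk2.
    destruct (Nat.le_gt_cases k m); [rewrite (Ec_out _ n k) by lia|rewrite (Ec_out _ m k) by lia]; ring. }
  apply csum_ext. intros k Hk. rewrite !Cpow_eq.
  rewrite Ec_in, Ec_in by lia.
  replace (sqrt (INR (fact m) * INR (fact n)) /
      (INR (fact k) * INR (fact (m - k)) * INR (fact (n - k))))
    with (sf m / sf k / INR (fact (m - k)) * (sf n / sf k / INR (fact (n - k)))).
  rewrite RtoC_mult. rewrite (Cpow_eq (- Cconj al)). ring.
  rewrite sqrt_mult by (apply Rlt_le, fact_pos). fold (sf m) (sf n).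
  rewrite <- (sf_sq k). pose proof (sf_pos k). pose proof (INR_fact_neq_0 (m - k)).
  pose proof (INR_fact_neq_0 (n - k)). field. repeat split; auto; lra.
Qed.

Lemma Cpow_m1_sub a k : (k <= a)%nat -> ((RtoC (-1)) ^ (a - k) * (RtoC (-1)) ^ a = (RtoC (-1)) ^ k)%C.
Proof.
  intros H. replace a with ((a - k) + k)%nat at 2 by lia. rewrite Cpow_add_r.
  replace ((RtoC (-1)) ^ (a - k) * ((RtoC (-1)) ^ (a - k) * (RtoC (-1)) ^ k))%C with
    (((RtoC (-1)) * (RtoC (-1))) ^ (a - k) * (RtoC (-1)) ^ k)%C by (rewrite Cpow_mult_l; ring).
  replace (RtoC (-1) * RtoC (-1))%C with (RtoC 1) by (rewrite <- RtoC_mult; f_equal; ring).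
  rewrite Cpow_1_l. ring.
Qed.

Lemma Cpow_opp z n : ((- z) ^ n = (RtoC (-1)) ^ n * z ^ n)%C.
Proof. replace (- z)%C with (RtoC (-1) * z)%C. apply Cpow_mult_l.
  destruct z; unfold Cmult, Copp, RtoC; simpl; f_equal; ring. Qed.

Lemma Cconj_RtoC r : Cconj (RtoC r) = RtoC r.
Proof. unfold Cconj, RtoC; simpl. f_equal; ring. Qed.

Lemma Ec_conj b j k : Cconj (Ec b j k) = Ec (Cconj b) j k.
Proof.
  unfold Ec. destruct (k <=? j)%nat. rewrite Cmult_conj, Cpow_conj, Cconj_RtoC; auto.
  apply Cconj_RtoC.
Qed.

Lemma disp_adj al i l :
  (RtoC ((-1) ^ l) * Cconj (disp_elem al i l) = RtoC ((-1) ^ i) * disp_elem al l i)%C.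
Proof.
  rewrite (disp_E al i l (S (Nat.min i l))) by lia.
  rewrite (disp_E al l i (S (Nat.min i l))) by lia.
  rewrite Cmult_conj, Cconj_RtoC, csum_conj.
  rewrite !RtoC_pow. rewrite !csum_mult_l.
  apply csum_ext. intros k Hk.
  rewrite Cmult_conj, !Ec_conj.
  rewrite Copp_conj, Cconj_conj.
  rewrite !Ec_in by lia.
  rewrite !(Cpow_opp al), !(Cpow_opp (Cconj al)).
  transitivity (((RtoC (-1)) ^ (l - k) * (RtoC (-1)) ^ l) * (Cconj al ^ (i - k) * al ^ (l - k)) *
    RtoC (sf i / sf k / INR (fact (i - k))) * RtoC (sf l / sf k / INR (fact (l - k))) * RtoC (ex2 al))%C.
  ring.
  rewrite Cpow_m1_sub by lia. rewrite <- (Cpow_m1_sub i k) by lia. ring.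
Qed.

Lemma sum_inv_fact n : csum (S n) (fun s => RtoC (/ (INR (fact s) * INR (fact (n - s)))))
  = RtoC (2 ^ n / INR (fact n)).
Proof.
  rewrite (csum_ext _ _ (fun s => RtoC (Binomial.C n s * 1 ^ s * 1 ^ (n - s) * / INR (fact n)))).
  rewrite csum_RtoC, <- scal_sum, <- binomial. f_equal. replace (1 + 1) with 2 by ring.
  unfold Rdiv; ring.
  intros s Hs. f_equal. rewrite !pow1. unfold Binomial.C.
  pose proof (INR_fact_neq_0 s). pose proof (INR_fact_neq_0 (n - s)). pose proof (INR_fact_neq_0 n).
  field. auto.
Qed.

Lemma EE b j r : csum (S j) (fun k => Ec b j k * Ec b k r)%C = Ec (RtoC 2 * b) j r.
Proof.
  destruct (Nat.lt_ge_cases j r) as [Hjr|Hrj].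
  - rewrite Ec_out by auto. apply csum_zero. intros k Hk. rewrite (Ec_out b k r) by lia. ring.
  - replace (S j) with (r + S (j - r))%nat by lia. rewrite csum_split.
    rewrite (csum_zero r). 2:{ intros k Hk. rewrite (Ec_out b k r) by lia. ring. }
    rewrite (csum_ext _ _ (fun s => (b ^ (j - r) * RtoC (sf j / sf r)) *
        RtoC (/ (INR (fact s) * INR (fact (j - r - s)))))%C).
    rewrite <- csum_mult_l, sum_inv_fact. rewrite Ec_in by lia.
    rewrite Cpow_mult_l, <- RtoC_pow.
    transitivity (b ^ (j - r) * RtoC (sf j / sf r * (2 ^ (j - r) / INR (fact (j - r)))))%C.
    rewrite RtoC_mult; ring.
    replace (sf j / sf r * (2 ^ (j - r) / INR (fact (j - r)))) with
      (2 ^ (j - r) * (sf j / sf r / INR (fact (j - r)))).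
    rewrite RtoC_mult; ring.
    pose proof (sf_pos r). pose proof (INR_fact_neq_0 (j - r)). field. split; auto; lra.
    intros s Hs. rewrite !Ec_in by lia.
    replace (j - (r + s))%nat with (j - r - s)%nat by lia.
    replace (r + s - r)%nat with s by lia.
    replace (b ^ (j - r))%C with (b ^ (j - r - s) * b ^ s)%C
      by (rewrite <- Cpow_add_r; f_equal; lia).
    transitivity ((b ^ (j - r - s) * b ^ s) *
      RtoC (sf j / sf (r + s) / INR (fact (j - r - s)) * (sf (r + s) / sf r / INR (fact s))))%C.
    rewrite RtoC_mult. ring.
    replace (sf j / sf (r + s) / INR (fact (j - r - s)) * (sf (r + s) / sf r / INR (fact s)))
      with (sf j / sf r * / (INR (fact s) * INR (fact (j - r - s)))).
    rewrite RtoC_mult. ring.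
    pose proof (sf_pos r). pose proof (sf_pos (r + s)). pose proof (INR_fact_neq_0 s).
    pose proof (INR_fact_neq_0 (j - r - s)). field. repeat split; auto; lra.
Qed.

Fixpoint bn (a r : nat) : nat :=
  match a, r with
  | _, O => 1
  | O, S _ => 0
  | S a', S r' => (bn a' r' + bn a' (S r'))%nat
  end.

Lemma bn_out a r : (a < r)%nat -> bn a r = 0%nat.
Proof.
  revert r; induction a; intros r H; destruct r; simpl; try lia; auto.
  rewrite !IHa by lia. auto.
Qed.

Lemma bn_fact a r : (r <= a)%nat -> (bn a r * fact r * fact (a - r))%nat = fact a.
Proof.
  revert r; induction a; intros r H.
  - destruct r; simpl; lia.
  - destruct r. simpl bn. rewrite Nat.sub_0_r. simpl fact at 1. lia.
    simpl bn. destruct (Nat.eq_dec r a) as [->|Hra].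
    + rewrite (bn_out a (S a)) by lia. rewrite Nat.sub_diag. pose proof (IHa a (le_n a)) as E.
      rewrite Nat.sub_diag in E. simpl fact in *. nia.
    + pose proof (IHa r ltac:(lia)) as E1. pose proof (IHa (S r) ltac:(lia)) as E2.
      replace (S a - S r)%nat with (a - r)%nat by lia.
      replace (a - r)%nat with (S (a - S r))%nat in * by lia.
      change (fact (S a)) with (S a * fact a)%nat.
      change (fact (S r)) with (S r * fact r)%nat.
      change (fact (S (a - S r))) with (S (a - S r) * fact (a - S r))%nat in *.
      assert (Hd : S a = (S r + S (a - S r))%nat) by lia.
      transitivity (S r * (bn a r * fact r * (S (a - S r) * fact (a - S r))) +
                    S (a - S r) * (bn a (S r) * fact (S r) * fact (a - S r)))%nat.
      simpl fact. ring.
      rewrite E1, E2. rewrite Hd. ring.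
Qed.

Lemma INR_bn a r : INR (bn a r) =
  if (r <=? a)%nat then INR (fact a) / (INR (fact r) * INR (fact (a - r))) else 0.
Proof.
  destruct (Nat.leb_spec r a).
  - rewrite <- (bn_fact a r) by auto. rewrite !mult_INR.
    pose proof (INR_fact_neq_0 r). pose proof (INR_fact_neq_0 (a - r)). field. auto.
  - rewrite bn_out by auto. auto.
Qed.

Fixpoint nsum (n : nat) (f : nat -> nat) : nat :=
  match n with O => O | S n' => (nsum n' f + f n')%nat end.

Lemma nsum_ext n f g : (forall i, (i < n)%nat -> f i = g i) -> nsum n f = nsum n g.
Proof. induction n; intros H; simpl; auto. rewrite IHn, H; auto; intros; apply H; lia. Qed.

Lemma nsum_front n f : nsum (S n) f = (f O + nsum n (fun i => f (S i)))%nat.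
Proof.
  induction n. simpl. lia.
  change (nsum (S (S n)) f) with (nsum (S n) f + f (S n))%nat. rewrite IHn. simpl. lia.
Qed.

Lemma nsum_plus n f g : nsum n (fun i => f i + g i)%nat = (nsum n f + nsum n g)%nat.
Proof. induction n; simpl; auto. rewrite IHn; lia. Qed.

Lemma nsum_zero n f : (forall i, (i < n)%nat -> f i = O) -> nsum n f = O.
Proof. induction n; intros H; simpl; auto. rewrite IHn, H; auto; intros; apply H; lia. Qed.

Lemma vandermonde a b n : nsum (S n) (fun r => bn a r * bn b (n - r))%nat = bn (a + b) n.
Proof.
  revert n; induction a; intros n.
  - rewrite nsum_front. simpl. rewrite nsum_zero. rewrite Nat.sub_0_r. lia.
    intros i _. simpl. auto.
  - destruct n.
    + simpl. destruct b; reflexivity.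
    + rewrite nsum_front. simpl bn at 1. rewrite Nat.sub_0_r.
      rewrite (nsum_ext _ _ (fun i => bn a i * bn b (n - i) + bn a (S i) * bn b (S n - S i))%nat).
      2:{ intros i Hi. simpl. lia. }
      rewrite nsum_plus. rewrite IHa.
      pose proof (IHa (S n)) as E. rewrite nsum_front in E.
      assert (Ha0 : bn a 0 = 1%nat) by (destruct a; auto). rewrite Ha0, Nat.sub_0_r in E.
      assert (E2 : nsum (S n) (fun i : nat => bn a (S i) * bn b (S n - S i))%nat =
                   nsum (S n) (fun i : nat => bn a (S i) * bn b (n - i))%nat).
      { apply nsum_ext; intros; f_equal. }
      rewrite E2. change (S a + b)%nat with (S (a + b)).
      change (bn (S (a + b)) (S n)) with (bn (a + b) n + bn (a + b) (S n))%nat. lia.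
Qed.

Lemma INR_nsum n f : INR (nsum (S n) f) = sum_f_R0 (fun i => INR (f i)) n.
Proof.
  induction n. simpl. ring.
  change (nsum (S (S n)) f) with (nsum (S n) f + f (S n))%nat.
  rewrite plus_INR, IHn. simpl. auto.
Qed.

Lemma core_real k k' l : (k <= l)%nat -> (k' <= l)%nat ->
  sum_f_R0 (fun r => if andb (r <=? k')%nat (k + k' <=? l + r)%nat then
     sf k / sf r / INR (fact (k - r)) * (sf k' / sf r / INR (fact (k' - r)))
       / INR (fact (l + r - k - k')) else 0) k
  = sf l / sf k / INR (fact (l - k)) * (sf l / sf k' / INR (fact (l - k'))).
Proof.
  intros Hk Hk'.
  rewrite (sum_eq _ (fun r => INR (bn k' r * bn (l - k') (k - r)) *
             (sf k * sf k' / (INR (fact k') * INR (fact (l - k')))))).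
  - rewrite <- scal_sum. rewrite <- (INR_nsum k (fun r => bn k' r * bn (l - k') (k - r))%nat).
    rewrite vandermonde. replace (k' + (l - k'))%nat with l by lia.
    rewrite INR_bn. replace (k <=? l)%nat with true by (symmetry; apply Nat.leb_le; lia).
    rewrite <- (sf_sq k), <- (sf_sq k'), <- (sf_sq l).
    pose proof (sf_pos k). pose proof (sf_pos k'). pose proof (sf_pos l).
    pose proof (INR_fact_neq_0 (l - k)). pose proof (INR_fact_neq_0 (l - k')).
    field. repeat split; auto; lra.
  - intros r Hr. rewrite mult_INR, !INR_bn.
    destruct (Nat.leb_spec r k'); destruct (Nat.leb_spec (k + k') (l + r)); simpl.
    + replace (k - r <=? l - k')%nat with true by (symmetry; apply Nat.leb_le; lia).
      replace (l - k' - (k - r))%nat with (l + r - k - k')%nat by lia.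
      rewrite <- (sf_sq k'), <- (sf_sq r).
      pose proof (sf_pos k). pose proof (sf_pos k'). pose proof (sf_pos r).
      pose proof (INR_fact_neq_0 (l - k')). pose proof (INR_fact_neq_0 (k - r)).
      pose proof (INR_fact_neq_0 (k' - r)). pose proof (INR_fact_neq_0 (l + r - k - k')).
      field. repeat split; auto; lra.
    + replace (k - r <=? l - k')%nat with false by (symmetry; apply Nat.leb_gt; lia). ring.
    + ring.
    + ring.
Qed.

Lemma core b g w k k' : (b * g = RtoC w)%C ->
  Cis_series (fun l => Ec g l k * Ec b l k')%C
    (RtoC (exp w) * csum (S k) (fun r => Ec b k r * Ec g k' r))%C.
Proof.
  intros Hbg.
  assert (Hr : forall r, Cis_series (fun l => if (k + k' - r <=? l)%nat then
       (Ec b k r * Ec g k' r) * RtoC (w ^ (l - (k + k' - r)) / INR (fact (l - (k + k' - r))))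
       else RtoC 0)%C ((Ec b k r * Ec g k' r) * RtoC (exp w))%C).
  { intros r. apply (Cis_shift (fun n => (Ec b k r * Ec g k' r) * RtoC (w ^ n / INR (fact n)))%C).
    apply Cis_scal, Cis_exp. }
  pose proof (Cis_csum (S k) _ _ (fun r _ => Hr r)) as H.
  eapply Cis_ext_l; [|eapply Cis_ext; [|exact H]].
  - rewrite csum_mult_l. apply csum_ext; intros; ring.
  - intros l. cbv beta.
    destruct (Nat.lt_ge_cases l k) as [Hlk|Hlk].
    { rewrite (Ec_out g l k) by auto. rewrite Cmult_0_l. apply csum_zero. intros r Hr'.
      destruct (Nat.leb_spec (k + k' - r) l); auto. rewrite (Ec_out g k' r) by lia. ring. }
    destruct (Nat.lt_ge_cases l k') as [Hlk'|Hlk'].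
    { rewrite (Ec_out b l k') by auto. rewrite Cmult_0_r. apply csum_zero. intros r Hr'.
      destruct (Nat.leb_spec (k + k' - r) l); auto. lia. }
    rewrite (csum_ext _ _ (fun r => (b ^ (l - k') * g ^ (l - k)) * RtoC (
       if andb (r <=? k')%nat (k + k' <=? l + r)%nat then
       sf k / sf r / INR (fact (k - r)) * (sf k' / sf r / INR (fact (k' - r)))
       / INR (fact (l + r - k - k')) else 0))%C).
    + rewrite <- csum_mult_l, csum_RtoC, core_real by auto.
      rewrite !Ec_in by auto. rewrite RtoC_mult. ring.
    + intros r Hr'.
      destruct (Nat.leb_spec (k + k' - r) l); destruct (Nat.leb_spec r k');
        destruct (Nat.leb_spec (k + k') (l + r)); simpl; try lia.
      * rewrite !Ec_in by lia.
        set (n := (l - (k + k' - r))%nat).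
        replace (l - k')%nat with (k - r + n)%nat by (unfold n; lia).
        replace (l - k)%nat with (k' - r + n)%nat by (unfold n; lia).
        replace (l + r - k - k')%nat with n by (unfold n; lia).
        rewrite !Cpow_add_r. unfold Rdiv. rewrite !RtoC_mult.
        rewrite (RtoC_pow w n), <- Hbg, Cpow_mult_l. ring.
      * try (rewrite (Ec_out g k' r) by lia); ring.
      * try (rewrite (Ec_out g k' r) by lia); ring.
Qed.

Lemma csum_prod n m f g : (csum n f * csum m g)%C = csum n (fun k => csum m (fun k' => f k * g k'))%C.
Proof.
  rewrite csum_mult_r. apply csum_ext. intros k _. rewrite csum_mult_l. auto.
Qed.

Lemma mult_conj_opp al : (al * - Cconj al = RtoC (- Cmod al ^ 2))%C.
Proof. rewrite RtoC_opp, Cmod2_conj. ring. Qed.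

Lemma parity_closed al j i :
  disp_parity_elem al j i = (RtoC ((-1) ^ i) * RtoC (exp (-2 * Cmod al ^ 2)) *
     csum (S j) (fun r => Ec (RtoC 2 * al) j r * Ec (RtoC 2 * (- Cconj al)) i r))%C.
Proof.
  set (g := (- Cconj al)%C).
  unfold disp_parity_elem. apply Cis_unique.
  set (C0 := (RtoC ((-1) ^ i) * RtoC (ex2 al * ex2 al))%C).
  apply (Cis_ext (fun l => C0 * csum (S j) (fun k => csum (S i) (fun k' =>
     (Ec al j k * Ec g i k') * (Ec g l k * Ec al l k'))))%C).
  { intros l. rewrite Cmult_assoc, (Cmult_comm (RtoC ((-1) ^ l))), <- Cmult_assoc, disp_adj.
    rewrite (disp_E al j l (S j)) by lia. rewrite (disp_E al l i (S i)) by lia.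
    unfold C0. fold g.
    transitivity (RtoC ((-1) ^ i) * RtoC (ex2 al * ex2 al) *
      (csum (S j) (fun k => Ec al j k * Ec g l k) * csum (S i) (fun k => Ec al l k * Ec g i k)))%C.
    rewrite csum_prod. f_equal. apply csum_ext; intros; apply csum_ext; intros; ring.
    rewrite RtoC_mult. ring. }
  eapply Cis_ext_l; [|apply Cis_scal, Cis_csum; intros k _; apply Cis_csum; intros k' _;
    apply Cis_scal; apply (core al g (- Cmod al ^ 2)); apply mult_conj_opp].
  unfold C0. 
  replace (exp (-2 * Cmod al ^ 2)) with (ex2 al * ex2 al * exp (- Cmod al ^ 2)).
  2:{ unfold ex2. rewrite <- !exp_plus. f_equal. field. }
  rewrite (RtoC_mult (ex2 al * ex2 al)).
  rewrite <- !Cmult_assoc. f_equal. f_equal.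
  transitivity (RtoC (exp (- Cmod al ^ 2)) * csum (S j) (fun k => csum (S i) (fun k' =>
     csum (S j) (fun r => Ec al j k * Ec al k r * (Ec g i k' * Ec g k' r)))))%C.
  { rewrite csum_mult_l. apply csum_ext. intros k Hk. rewrite csum_mult_l.
    apply csum_ext. intros k' Hk'.
    rewrite (csum_extend (S k) (S j)); [|lia|].
    2:{ intros r Hr1 Hr2. rewrite (Ec_out al k r) by lia. ring. }
    rewrite !csum_mult_l. apply csum_ext. intros; ring. }
  f_equal.
  rewrite (csum_ext _ _ (fun k => csum (S j) (fun r => csum (S i) (fun k' =>
     Ec al j k * Ec al k r * (Ec g i k' * Ec g k' r)))%C)).
  2:{ intros k _. apply csum_swap. }
  rewrite csum_swap. apply csum_ext. intros r _.
  rewrite <- csum_prod. rewrite EE, EE. auto.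
Qed.

Lemma wigner_fin A K al : bnd K A ->
  wigner A al = (RtoC (2 / PI) * csum K (fun i => csum K (fun j => A i j * disp_parity_elem al j i)))%C.
Proof.
  intros HA. unfold wigner. f_equal.
  rewrite (CSeries_finite _ K).
  - apply csum_ext. intros i Hi. apply CSeries_finite. intros j Hj. rewrite HA by lia. ring.
  - intros i Hi. rewrite (CSeries_finite _ K). apply csum_zero. intros j _. rewrite HA by lia. ring.
    intros j Hj. rewrite HA by lia. ring.
Qed.

Definition cc (j r : nat) : R := sf j / sf r / INR (fact (j - r)).

Definition Tc (i j r : nat) : C :=
  if andb (r <=? i)%nat (r <=? j)%nat then
    RtoC ((-1) ^ i * 2 ^ (j - r) * (-2) ^ (i - r) * cc j r * cc i r) else RtoC 0.

Lemma Tc_conv al i j r :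
  (RtoC ((-1) ^ i) * (Ec (RtoC 2 * al) j r * Ec (RtoC 2 * (- Cconj al)) i r))%C =
  (Tc i j r * al ^ (j - r) * Cconj al ^ (i - r))%C.
Proof.
  unfold Tc. destruct (Nat.leb_spec r i); destruct (Nat.leb_spec r j); simpl.
  - rewrite !Ec_in by auto. rewrite !Cpow_mult_l. rewrite Cpow_opp.
    unfold cc. rewrite <- !RtoC_pow.
    replace ((-2) ^ (i - r)) with ((-1) ^ (i - r) * 2 ^ (i - r)) by (rewrite <- Rpow_mult_distr; f_equal; ring).
    rewrite !RtoC_mult. ring.
  - rewrite (Ec_out _ j r) by lia. ring.
  - rewrite (Ec_out _ i r) by lia. ring.
  - rewrite (Ec_out _ i r) by lia. ring.
Qed.

Definition Qf (K : nat) (A : Op) (al : C) : C :=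
  csum K (fun i => csum K (fun j => A i j * csum K (fun r => Tc i j r * al ^ (j - r) * Cconj al ^ (i - r))))%C.

Lemma wigner_Q A K al : bnd K A ->
  wigner A al = (RtoC (2 / PI) * RtoC (exp (-2 * Cmod al ^ 2)) * Qf K A al)%C.
Proof.
  intros HA. rewrite (wigner_fin A K) by auto. unfold Qf.
  rewrite <- Cmult_assoc. f_equal.
  rewrite csum_mult_l. apply csum_ext. intros i Hi.
  rewrite csum_mult_l. apply csum_ext. intros j Hj.
  rewrite parity_closed.
  rewrite (csum_extend (S j) K); [|lia|].
  2:{ intros r Hr1 Hr2. unfold Tc. replace (r <=? j)%nat with false by (symmetry; apply Nat.leb_gt; lia).
      rewrite Bool.andb_false_r. ring. }
  rewrite (csum_ext (S j) (fun r => Tc i j r * al ^ (j - r) * Cconj al ^ (i - r))%C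
     (fun r => RtoC ((-1) ^ i) * (Ec (RtoC 2 * al) j r * Ec (RtoC 2 * (- Cconj al)) i r))%C).
  2:{ intros; rewrite Tc_conv; auto. }
  rewrite <- csum_mult_l. ring.
Qed.

Lemma csum_shift K r F : (forall i, (i < r)%nat -> F i = RtoC 0) ->
  (forall i, (K <= i)%nat -> F i = RtoC 0) ->
  csum K F = csum K (fun q => F (q + r)%nat).
Proof.
  intros H1 H2. destruct (Nat.le_gt_cases K r).
  - rewrite !csum_zero; auto. intros; apply H2; lia. intros; apply H1; lia.
  - replace K with (r + (K - r))%nat at 1 by lia. rewrite csum_split.
    rewrite (csum_zero r) by auto.
    rewrite (csum_extend (K - r) K (fun q => F (q + r)%nat)); [|lia|].
    2:{ intros; apply H2; lia. }
    rewrite Cplus_0_l. apply csum_ext. intros; f_equal; lia.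
Qed.

Definition cf (K : nat) (A : Op) (p q : nat) : C :=
  csum K (fun r => A (q + r)%nat (p + r)%nat * Tc (q + r) (p + r) r)%C.

Lemma Q_P2 K A al : bnd K A ->
  Qf K A al = csum K (fun p => csum K (fun q => cf K A p q * al ^ p * Cconj al ^ q))%C.
Proof.
  intros HA. unfold Qf.
  rewrite (csum_ext _ _ (fun i => csum K (fun r => csum K (fun j =>
     A i j * Tc i j r * al ^ (j - r) * Cconj al ^ (i - r))))%C).
  2:{ intros i Hi. rewrite csum_swap. apply csum_ext. intros j _. rewrite csum_mult_l.
      apply csum_ext; intros; ring. }
  rewrite csum_swap.
  rewrite (csum_ext _ _ (fun r => csum K (fun q => csum K (fun p =>
     A (q + r)%nat (p + r)%nat * Tc (q + r) (p + r) r * al ^ p * Cconj al ^ q)))%C).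
  2:{ intros r Hr. rewrite (csum_shift K r).
      - apply csum_ext. intros q Hq. rewrite (csum_shift K r).
        + apply csum_ext. intros p Hp. replace (p + r - r)%nat with p by lia.
          replace (q + r - r)%nat with q by lia. auto.
        + intros j Hj. unfold Tc. replace (r <=? j)%nat with false by (symmetry; apply Nat.leb_gt; lia).
          rewrite Bool.andb_false_r. ring.
        + intros j Hj. rewrite HA by lia. ring.
      - intros i Hi. apply csum_zero. intros j _. unfold Tc.
        replace (r <=? i)%nat with false by (symmetry; apply Nat.leb_gt; lia). simpl. ring.
      - intros i Hi. apply csum_zero. intros j _. rewrite HA by lia. ring. }
  rewrite (csum_ext _ _ (fun r => csum K (fun p => csum K (fun q =>
     A (q + r)%nat (p + r)%nat * Tc (q + r) (p + r) r * al ^ p * Cconj al ^ q)))%C).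
  2:{ intros; apply csum_swap. }
  rewrite csum_swap. apply csum_ext. intros p _.
  rewrite csum_swap. apply csum_ext. intros q _. unfold cf.
  rewrite !csum_mult_r. apply csum_ext; intros; ring.
Qed.

Lemma geom z z0 K : (z ^ (S K) - z0 ^ (S K) = (z - z0) * csum (S K) (fun k => z0 ^ (K - k) * z ^ k))%C.
Proof.
  induction K.
  - simpl. ring.
  - rewrite csum_front. rewrite Nat.sub_0_r.
    rewrite (csum_ext _ _ (fun k => z * (z0 ^ (K - k) * z ^ k))%C).
    2:{ intros k Hk. replace (S K - S k)%nat with (K - k)%nat by lia. simpl. ring. }
    rewrite <- csum_mult_l.
    change (z ^ S (S K))%C with (z * z ^ S K)%C.
    change (z0 ^ S (S K))%C with (z0 * z0 ^ S K)%C.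
    replace (z * z ^ S K - z0 * z0 ^ S K)%C with (z * (z ^ S K - z0 ^ S K) + z0 ^ S K * (z - z0))%C by ring.
    rewrite IHK. simpl. ring.
Qed.

Lemma div_poly K (a : nat -> C) z0 : exists b : nat -> C,
  (forall z, (csum (S K) (fun k => a k * z ^ k) - csum (S K) (fun k => a k * z0 ^ k)
     = (z - z0) * csum K (fun k => b k * z ^ k))%C) /\
  ((forall k, (k < K)%nat -> b k = RtoC 0) -> forall k, (1 <= k)%nat -> (k <= K)%nat -> a k = RtoC 0).
Proof.
  induction K.
  - exists (fun _ => RtoC 0). split. intros z. simpl. ring. intros; lia.
  - destruct IHK as [b [Hb1 Hb2]].
    exists (fun k => if (k <? K)%nat then (b k + a (S K) * z0 ^ (K - k))%C else a (S K)).
    split.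
    + intros z. change (csum (S (S K)) (fun k => a k * z ^ k))%C with
        (csum (S K) (fun k => a k * z ^ k) + a (S K) * z ^ (S K))%C.
      change (csum (S (S K)) (fun k => a k * z0 ^ k))%C with
        (csum (S K) (fun k => a k * z0 ^ k) + a (S K) * z0 ^ (S K))%C.
      replace (csum (S K) (fun k => a k * z ^ k) + a (S K) * z ^ S K -
        (csum (S K) (fun k => a k * z0 ^ k) + a (S K) * z0 ^ S K))%C with
        ((csum (S K) (fun k => a k * z ^ k) - csum (S K) (fun k => a k * z0 ^ k)) +
          a (S K) * (z ^ S K - z0 ^ S K))%C by ring.
      rewrite Hb1, geom.
      change (csum (S K) (fun k => (if (k <? K)%nat then (b k + a (S K) * z0 ^ (K - k))%C else a (S K)) * z ^ k))%C
        with (csum K (fun k => (if (k <? K)%nat then (b k + a (S K) * z0 ^ (K - k))%C else a (S K)) * z ^ k)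
              + (if (K <? K)%nat then (b K + a (S K) * z0 ^ (K - K))%C else a (S K)) * z ^ K)%C.
      rewrite Nat.ltb_irrefl.
      rewrite (csum_ext K (fun k => (if (k <? K)%nat then (b k + a (S K) * z0 ^ (K - k))%C else a (S K)) * z ^ k)%C
        (fun k => b k * z ^ k + a (S K) * (z0 ^ (K - k) * z ^ k))%C).
      2:{ intros k Hk. destruct (Nat.ltb_spec k K); [ring|lia]. }
      rewrite csum_plus, <- csum_mult_l.
      change (csum (S K) (fun k => z0 ^ (K - k) * z ^ k))%C with
        (csum K (fun k => z0 ^ (K - k) * z ^ k) + z0 ^ (K - K) * z ^ K)%C.
      rewrite Nat.sub_diag. simpl. ring.
    + intros H k Hk1 Hk2.
      assert (HaK : a (S K) = RtoC 0).
      { pose proof (H K (Nat.lt_succ_diag_r K)) as E. rewrite Nat.ltb_irrefl in E. auto. }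
      destruct (Nat.eq_dec k (S K)) as [->|Hne]; auto.
      apply Hb2; try lia. intros j Hj. pose proof (H j ltac:(lia)) as E.
      destruct (Nat.ltb_spec j K); [|lia].
      rewrite HaK in E. rewrite <- E. ring.
Qed.

Lemma polyroot K : forall (a : nat -> C) (f : nat -> C),
  (forall m n, f m = f n -> m = n) ->
  (forall n, csum K (fun k => a k * f n ^ k)%C = RtoC 0) ->
  forall k, (k < K)%nat -> a k = RtoC 0.
Proof.
  induction K; intros a f Hf H k Hk. lia.
  destruct (div_poly K a (f O)) as [b [Hb1 Hb2]].
  assert (Hb : forall k, (k < K)%nat -> b k = RtoC 0).
  { apply (IHK b (fun n => f (S n))).
    - intros m n E. apply Hf in E. lia.
    - intros n. pose proof (Hb1 (f (S n))) as E. rewrite !H in E.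
      apply (Cmult_reg_l (f (S n) - f O)%C).
      rewrite <- E. ring.
      intros E2. assert (f (S n) = f O) by (replace (f (S n)) with (f (S n) - f O + f O)%C by ring;
        rewrite E2; ring). apply Hf in H0. lia. }
  destruct k.
  - pose proof (H O) as E. rewrite csum_front in E.
    rewrite csum_zero in E. simpl in E. rewrite <- E. ring.
    intros i Hi. rewrite (Hb2 Hb (S i)) by lia. ring.
  - apply Hb2; auto; lia.
Qed.

Lemma regroup K (G : nat -> nat -> C) (X : C) :
  csum K (fun p => csum K (fun q => G p q * X ^ (p + q)))%C =
  csum (K + K) (fun n => csum K (fun p => if andb (p <=? n)%nat (n - p <? K)%nat then G p (n - p)%nat
     else RtoC 0) * X ^ n)%C.
Proof.
  symmetry.
  rewrite (csum_ext (K + K) (fun n => csum K (fun p => if andb (p <=? n)%nat (n - p <? K)%nat then G p (n - p)%nat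
     else RtoC 0) * X ^ n)%C (fun n => csum K (fun p =>
     (if andb (p <=? n)%nat (n - p <? K)%nat then G p (n - p)%nat else RtoC 0) * X ^ n)%C)).
  2:{ intros; apply csum_mult_r. }
  rewrite csum_swap. symmetry. apply csum_ext. intros p Hp.
  rewrite (csum_shift (K + K) p).
  - rewrite (csum_extend K (K + K)); [|lia|].
    + apply csum_ext. intros q Hq.
      replace (p <=? q + p)%nat with true by (symmetry; apply Nat.leb_le; lia).
      replace (q + p - p)%nat with q by lia.
      replace (q <? K)%nat with true by (symmetry; apply Nat.ltb_lt; lia). simpl.
      f_equal. f_equal. lia.
    + intros q Hq1 Hq2. replace (q + p - p)%nat with q by lia.
      replace (q <? K)%nat with false by (symmetry; apply Nat.ltb_ge; lia).
      rewrite Bool.andb_false_r. ring.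
  - intros n Hn. replace (p <=? n)%nat with false by (symmetry; apply Nat.leb_gt; lia). simpl. ring.
  - intros n Hn. replace (n - p <? K)%nat with false by (symmetry; apply Nat.ltb_ge; lia).
    rewrite Bool.andb_false_r. ring.
Qed.

Definition uy (y : R) : C := (1, y).

Lemma uy_conj_nz y : Cconj (uy y) <> RtoC 0.
Proof. intros H. unfold uy, Cconj, RtoC in H. simpl in H. inversion H. lra. Qed.

Definition zy (y : R) : C := (uy y / Cconj (uy y))%C.

Lemma zy_inj m n : zy (INR m) = zy (INR n) -> m = n.
Proof.
  intros H. unfold zy in H.
  assert (E : (uy (INR m) * Cconj (uy (INR n)) = uy (INR n) * Cconj (uy (INR m)))%C).
  { pose proof (uy_conj_nz (INR m)). pose proof (uy_conj_nz (INR n)).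
    transitivity (uy (INR m) / Cconj (uy (INR m)) * (Cconj (uy (INR m)) * Cconj (uy (INR n))))%C.
    field; auto. rewrite H. field. auto. }
  unfold uy, Cconj, Cmult in E; simpl in E. inversion E. apply INR_eq. lra.
Qed.

Lemma poly2_zero K (c : nat -> nat -> C) :
  (forall al, csum K (fun p => csum K (fun q => c p q * al ^ p * Cconj al ^ q))%C = RtoC 0) ->
  forall p q, (p < K)%nat -> (q < K)%nat -> c p q = RtoC 0.
Proof.
  intros H.
  set (e := fun n p => if andb (p <=? n)%nat (n - p <? K)%nat then c p (n - p)%nat else RtoC 0).
  assert (Hy : forall y n, (n < K + K)%nat -> csum K (fun p => e n p * zy y ^ p)%C = RtoC 0).
  { intros y.
    set (d := fun n => csum K (fun p => if andb (p <=? n)%nat (n - p <? K)%nat then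
                 c p (n - p)%nat * uy y ^ p * Cconj (uy y) ^ (n - p) else RtoC 0)%C).
    assert (Hd : forall n, (n < K + K)%nat -> d n = RtoC 0).
    { apply (polyroot (K + K) d (fun n => RtoC (INR n))).
      - intros m n E. apply INR_eq. apply RtoC_inj in E. auto.
      - intros n. pose proof (H (RtoC (INR n) * uy y)%C) as E.
        rewrite <- E. unfold d. symmetry.
        rewrite (csum_ext K _ (fun p => csum K (fun q => (c p q * uy y ^ p * Cconj (uy y) ^ q) *
            RtoC (INR n) ^ (p + q))))%C.
        2:{ intros p _. apply csum_ext. intros q _. rewrite Cmult_conj, Cconj_RtoC.
            rewrite !Cpow_mult_l, Cpow_add_r. ring. }
        rewrite regroup. apply csum_ext. intros m _. f_equal. }
    intros n Hn. pose proof (Hd n Hn) as E. unfold d in E.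
    apply (Cmult_reg_l (Cconj (uy y) ^ n)%C). 2:{ apply Cpow_nz, uy_conj_nz. }
    rewrite <- E. rewrite csum_mult_l. apply csum_ext. intros p _. unfold e.
    destruct (Nat.leb_spec p n); simpl; [|ring].
    destruct (n - p <? K)%nat; [|ring].
    unfold zy, Cdiv. rewrite Cpow_mult_l, Cpow_inv by apply uy_conj_nz.
    replace n with (p + (n - p))%nat at 1 by lia. rewrite Cpow_add_r.
    field. apply Cpow_nz, uy_conj_nz. }
  intros p q Hp Hq.
  assert (E : e (p + q)%nat p = RtoC 0).
  { apply (polyroot K (e (p + q)%nat) (fun m => zy (INR m))).
    - apply zy_inj.
    - intros m. apply Hy. lia.
    - auto. }
  unfold e in E. replace (p <=? p + q)%nat with true in E by (symmetry; apply Nat.leb_le; lia).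
  replace (p + q - p)%nat with q in E by lia.
  replace (q <? K)%nat with true in E by (symmetry; apply Nat.ltb_lt; lia). auto.
Qed.

Lemma Tc0_nz q p : Tc q p 0 <> RtoC 0.
Proof.
  unfold Tc. simpl. intros E. apply RtoC_inj in E. revert E.
  unfold cc, Rdiv. rewrite !Nat.sub_0_r.
  pose proof (sf_pos p). pose proof (sf_pos q). pose proof (INR_fact_neq_0 p).
  pose proof (INR_fact_neq_0 q). pose proof (sf_pos 0).
  pose proof (pow_nonzero (-1) q ltac:(intro; lra)).
  pose proof (pow_nonzero 2 p ltac:(intro; lra)).
  pose proof (pow_nonzero (-2) q ltac:(intro; lra)).
  pose proof (Rinv_neq_0_compat (sf 0) ltac:(intro; lra)).
  pose proof (Rinv_neq_0_compat _ H1). pose proof (Rinv_neq_0_compat _ H2).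
  intros E.
  repeat match goal with H : _ * _ = 0 |- _ => apply Rmult_integral in H; destruct H as [H|H] end;
  try contradiction; lra.
Qed.

Lemma Q_inj K A : bnd K A -> (forall al, Qf K A al = RtoC 0) -> forall i j, A i j = RtoC 0.
Proof.
  intros HA HQ.
  assert (Hcf : forall p q, (p < K)%nat -> (q < K)%nat -> cf K A p q = RtoC 0).
  { apply poly2_zero. intros al. rewrite <- Q_P2 by auto. apply HQ. }
  assert (H : forall d p q, (K + K <= p + q + d)%nat -> A q p = RtoC 0).
  { induction d; intros p q Hpq.
    - apply HA. lia.
    - destruct (Nat.lt_ge_cases p K) as [Hp|Hp]; [|apply HA; lia].
      destruct (Nat.lt_ge_cases q K) as [Hq|Hq]; [|apply HA; lia].
      pose proof (Hcf p q Hp Hq) as E. unfold cf in E.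
      destruct K as [|K']. lia.
      rewrite csum_front in E. rewrite csum_zero in E.
      2:{ intros r Hr. rewrite IHd by lia. ring. }
      rewrite !Nat.add_0_r in E.
      apply (Cmult_reg_l (Tc q p 0)). rewrite Cmult_comm. rewrite <- E. ring.
      apply Tc0_nz. }
  intros i j. apply (H (K + K)%nat j i). lia.
Qed.

Lemma m1_sq p : (-1) ^ p * (-1) ^ p = 1.
Proof. rewrite <- Rpow_mult_distr. replace (-1 * -1) with 1 by ring. apply pow1. Qed.

Lemma cfB K m p q : (S m <= K)%nat ->
  cf K (binom_state m) p q = if andb (p =? m)%nat (q =? m)%nat then RtoC (2 ^ m / INR (fact m)) else RtoC 0.
Proof.
  intros HK. unfold cf.
  destruct (Nat.eq_dec p q) as [<-|Hpq].
  2:{ replace (andb (p =? m)%nat (q =? m)%nat) with false.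
      - apply csum_zero. intros r _. rewrite binom_off by lia. ring.
      - destruct (Nat.eqb_spec p m); destruct (Nat.eqb_spec q m); auto; lia. }
  destruct (Nat.leb_spec p m) as [Hpm|Hpm].
  2:{ replace (p =? m)%nat with false by (symmetry; apply Nat.eqb_neq; lia). simpl.
      apply csum_zero. intros r _. rewrite binom_bnd by lia. ring. }
  rewrite (csum_extend (S (m - p)) K); [|lia|].
  2:{ intros r Hr1 Hr2. rewrite binom_bnd by lia. ring. }
  rewrite (csum_ext _ _ (fun r => RtoC (Binomial.C (m - p) r * (-1) ^ r * 1 ^ (m - p - r) *
      (2 ^ p * 2 ^ p * Binomial.C m p / (2 ^ m * INR (fact p)))))).
  2:{ intros r Hr. rewrite binom_diag.
      replace (p + r <=? m)%nat with true by (symmetry; apply Nat.leb_le; lia).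
      unfold Tc. replace (r <=? p + r)%nat with true by (symmetry; apply Nat.leb_le; lia). simpl.
      rewrite <- RtoC_mult. f_equal.
      replace (p + r - r)%nat with p by lia.
      assert (Hcc : cc (p + r) r * cc (p + r) r = INR (fact (p + r)) / (INR (fact r) * (INR (fact p) * INR (fact p)))).
      { unfold cc. replace (p + r - r)%nat with p by lia. rewrite <- (sf_sq (p + r)), <- (sf_sq r).
        pose proof (sf_pos r). pose proof (INR_fact_neq_0 p). field. split; auto; lra. }
      replace (Binomial.C m (p + r) / 2 ^ m * ((-1) ^ (p + r) * 2 ^ p * (-2) ^ p * cc (p + r) r * cc (p + r) r))
        with (Binomial.C m (p + r) / 2 ^ m * (((-1) ^ p * (-1) ^ p) * (-1) ^ r * 2 ^ p * 2 ^ p * (cc (p + r) r * cc (p + r) r))).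
      2:{ rewrite pow_add. replace (-2) with (-1 * 2) by ring. rewrite Rpow_mult_distr. ring. }
      rewrite m1_sq, Hcc, pow1. unfold Binomial.C.
      replace (m - (p + r))%nat with (m - p - r)%nat by lia.
      pose proof (INR_fact_neq_0 m). pose proof (INR_fact_neq_0 p). pose proof (INR_fact_neq_0 r).
      pose proof (INR_fact_neq_0 (p + r)). pose proof (INR_fact_neq_0 (m - p)).
      pose proof (INR_fact_neq_0 (m - p - r)). pose proof (pow_nonzero 2 m ltac:(intro; lra)).
      field. repeat split; auto. }
  rewrite csum_RtoC, <- scal_sum, <- binomial. replace (-1 + 1) with 0 by ring.
  destruct (Nat.eqb_spec p m) as [->|Hne]; simpl.
  - rewrite Nat.sub_diag. simpl. f_equal. unfold Binomial.C. rewrite Nat.sub_diag. simpl.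
    pose proof (INR_fact_neq_0 m). pose proof (pow_nonzero 2 m ltac:(intro; lra)).
    field. auto.
  - rewrite pow_i by lia. f_equal. ring.
Qed.

Lemma Qf_binom K m al : (S m <= K)%nat ->
  Qf K (binom_state m) al = RtoC (2 ^ m / INR (fact m) * Cmod al ^ (2 * m)).
Proof.
  intros HK. rewrite Q_P2 by (apply (bnd_mono (S m)); auto; apply binom_bnd).
  rewrite (csum_single K m); [|lia|].
  2:{ intros p _ Hp. apply csum_zero. intros q _. rewrite cfB by auto.
      replace (p =? m)%nat with false by (symmetry; apply Nat.eqb_neq; auto). simpl. ring. }
  rewrite (csum_single K m); [|lia|].
  2:{ intros q _ Hq. rewrite cfB by auto. rewrite Nat.eqb_refl.
      replace (q =? m)%nat with false by (symmetry; apply Nat.eqb_neq; auto). simpl. ring. }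
  rewrite cfB by auto. rewrite Nat.eqb_refl. simpl.
  rewrite RtoC_mult. rewrite <- Cmult_assoc. f_equal.
  replace (m + (m + 0))%nat with (2 * m)%nat by lia.
  rewrite pow_mult, RtoC_pow, Cmod2_conj. rewrite Cpow_mult_l. auto.
Qed.

Lemma wigner_binom m al : wigner (binom_state m) al =
  (RtoC (2 / PI) * RtoC (2 ^ m / INR (fact m)) * RtoC (Cmod al ^ (2 * m) * exp (-2 * Cmod al ^ 2)))%C.
Proof.
  rewrite (wigner_Q _ (S m)) by apply binom_bnd. rewrite Qf_binom by lia.
  rewrite !RtoC_mult. ring.
Qed.

Lemma binom_wprop m : wigner_prop m (binom_state m).
Proof.
  exists (RtoC (2 / PI) * RtoC (2 ^ m / INR (fact m)))%C. intros al. apply wigner_binom.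
Qed.

Lemma Qf_lin K A B l al : Qf K (fun i j => A i j - l * B i j)%C al = (Qf K A al - l * Qf K B al)%C.
Proof.
  unfold Qf. unfold Cminus. rewrite csum_mult_l, csum_opp, <- csum_plus. apply csum_ext. intros i _.
  rewrite csum_mult_l, csum_opp, <- csum_plus. apply csum_ext. intros j _. ring.
Qed.

Lemma PI_nz : PI <> 0.
Proof. pose proof PI_RGT_0. lra. Qed.

Lemma wprop_binom rho m : is_density rho -> fock_bounded rho -> wigner_prop m rho ->
  forall i j, rho i j = binom_state m i j.
Proof.
  intros Hd Hb [c Hc].
  destruct (fock_bnd _ Hb) as [K HK].
  set (K2 := (K + S m)%nat).
  assert (HK2 : bnd K2 rho) by (apply (bnd_mono K); auto; unfold K2; lia).
  assert (HB2 : bnd K2 (binom_state m)) by (apply (bnd_mono (S m)); [unfold K2; lia|apply binom_bnd]).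
  set (P := RtoC (2 / PI)). set (F := RtoC (2 ^ m / INR (fact m))).
  assert (HP : P <> RtoC 0).
  { unfold P. intros E. apply RtoC_inj in E. pose proof PI_RGT_0.
    assert (0 < 2 / PI) by (apply Rdiv_lt_0_compat; lra). lra. }
  assert (HF : F <> RtoC 0).
  { unfold F. intros E. apply RtoC_inj in E.
    assert (0 < 2 ^ m / INR (fact m)) by (apply Rdiv_lt_0_compat; [apply pow_lt; lra|apply fact_pos]). lra. }
  set (lam := (c / (P * F))%C).
  set (D := fun i j => (rho i j - lam * binom_state m i j)%C).
  assert (HD : forall i j, D i j = RtoC 0).
  { apply (Q_inj K2).
    - intros i j H. unfold D. rewrite HK2, HB2 by auto. ring.
    - intros al. unfold D. rewrite Qf_lin.
      set (Ee := RtoC (exp (-2 * Cmod al ^ 2))).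
      assert (HE : Ee <> RtoC 0).
      { unfold Ee. intros E. apply RtoC_inj in E. pose proof (exp_pos (-2 * Cmod al ^ 2)). lra. }
      apply (Cmult_reg_l (P * Ee)%C).
      2:{ intros E. apply HE. apply (Cmult_reg_l P); auto. }
      pose proof (Hc al) as W. rewrite (wigner_Q rho K2) in W by auto.
      rewrite (Qf_binom K2) by (unfold K2; lia).
      fold P Ee in W.
      replace ((P * Ee) * (Qf K2 rho al - lam * RtoC (2 ^ m / INR (fact m) * Cmod al ^ (2 * m))))%C
        with (P * Ee * Qf K2 rho al - lam * P * F * Ee * RtoC (Cmod al ^ (2 * m)))%C
        by (unfold F; rewrite RtoC_mult; ring).
      rewrite W. unfold lam. rewrite RtoC_mult. fold Ee. field. split; auto. }
  assert (Hrho : forall i j, rho i j = (lam * binom_state m i j)%C).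
  { intros i j. pose proof (HD i j) as E. unfold D in E.
    replace (rho i j) with (rho i j - lam * binom_state m i j + lam * binom_state m i j)%C by ring.
    rewrite E. ring. }
  assert (Hlam : lam = RtoC 1).
  { destruct Hd as [_ [_ Htr]]. rewrite (trace_fin K2) in Htr by auto.
    rewrite (csum_ext _ _ (fun i => lam * binom_state m i i)%C) in Htr by auto.
    rewrite <- csum_mult_l in Htr.
    rewrite (csum_extend (S m)) in Htr. rewrite binom_trace in Htr.
    rewrite <- Htr. ring. unfold K2; lia. intros; rewrite binom_bnd by lia; ring. }
  intros i j. rewrite Hrho, Hlam. ring.
Qed.

Lemma op_ext (A B : Op) : (forall i j, A i j = B i j) -> A = B.
Proof.
  intros H. apply FunctionalExtensionality.functional_extensionality. intros i.
  apply FunctionalExtensionality.functional_extensionality. intros j. auto.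
Qed.

Lemma binom_all_eigen rho m : (forall i j, rho i j = binom_state m i j) ->
  forall t, 1 <= t -> forall i j, vertigo t rho i j = (RtoC (t ^ m) * rho i j)%C.
Proof.
  intros H t Ht i j. rewrite (op_ext _ _ H). apply binom_eigen. lra.
Qed.

Theorem lemma11 (rho : Op) (Hb : fock_bounded rho) (Hd : is_density rho) :
  ((exists t : R, 1 < t /\ vertigo_eigen t rho) <->
   (forall t : R, 1 <= t -> vertigo_eigen t rho)) /\
  ((forall t : R, 1 <= t -> vertigo_eigen t rho) <->
   (exists m : nat, wigner_prop m rho)) /\
  ((exists m : nat, wigner_prop m rho) <->
   (exists m : nat, forall i j, rho i j = binom_state m i j)) /\
  (forall m : nat, wigner_prop m rho ->
     forall t : R, 1 <= t -> forall i j,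
       vertigo t rho i j = Cmult (RtoC (t ^ m)) (rho i j)).
Proof.
  assert (I_B : (exists t : R, 1 < t /\ vertigo_eigen t rho) ->
                exists m, forall i j, rho i j = binom_state m i j).
  { intros [t [Ht He]]. apply (eig_binom rho t); auto. }
  assert (B_II : (exists m, forall i j, rho i j = binom_state m i j) ->
                 forall t : R, 1 <= t -> vertigo_eigen t rho).
  { intros [m Hm] t Ht. exists (RtoC (t ^ m)). apply binom_all_eigen; auto. }
  assert (II_I : (forall t : R, 1 <= t -> vertigo_eigen t rho) ->
                 exists t : R, 1 < t /\ vertigo_eigen t rho).
  { intros H. exists 2. split. lra. apply H. lra. }
  assert (B_III : (exists m, forall i j, rho i j = binom_state m i j) ->
                  exists m, wigner_prop m rho).
  { intros [m Hm]. exists m. rewrite (op_ext _ _ Hm). apply binom_wprop. }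
  assert (III_B : (exists m, wigner_prop m rho) ->
                  exists m, forall i j, rho i j = binom_state m i j).
  { intros [m Hm]. exists m. apply wprop_binom; auto. }
  split; [|split; [|split]].
  - split; auto.
  - split; auto.
  - split; auto.
  - intros m Hm t Ht i j. apply binom_all_eigen; auto. apply wprop_binom; auto.
Qed.
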